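(* Let $v \in \mathbb{R}$ and $x > 0$, and for $t \ge 0$ define $$f_{v,x}(t) = \cosh(vt)\,\exp(-x\cosh t), \qquad g_{v,x}(t) = \log f_{v,x}(t) = \log\cosh(vt) - x\cosh t .$$ Then: (i) if $v^2 \le x$, the function $g_{v,x}$ is monotonically decreasing on $[0,\infty)$, so its maximum on $[0,\infty)$ is attained at $t_p = 0$; (ii) if $v^2 > x$, the function $g_{v,x}$ has exactly one peak on $[0,\infty)$: there is a unique $t_p > 0$ with $g'_{v,x}(t_p) = 0$, and $g'_{v,x}(t) > 0$ for $0 < t < t_p$ and $g'_{v,x}(t) < 0$ for $t > t_p$. Moreover, in either case, letting $t_p$ be the maximizer of $f_{v,x}$ on $[0,\infty)$, for every $\epsilon \in (0,1)$ the set $\{t \ge 0 : f_{v,x}(t) \ge \epsilon\, f_{v,x}(t_p)\}$ is a single closed bounded interval $[t_0, t_1]$ with $0 \le t_0 \le t_p \le t_1$.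
   Context: These functions arise from the integral representation $K_v(x) = \int_0^\infty f_{v,x}(t)\,dt$ of the modified Bessel function of the second kind, so the variable $t$ ranges over $[0,\infty)$. *)

(* Defs.v *)
From Stdlib Require Import Reals.
From Coquelicot Require Import Coquelicot.
Open Scope R_scope.

Definition fvx (v x t : R) : R := cosh (v * t) * exp (- (x * cosh t)).

Definition gvx (v x t : R) : R := ln (cosh (v * t)) - x * cosh t.

(* Main.v *)
Require Import Defs.
From Stdlib Require Import Reals Lra Psatz.
From Coquelicot Require Import Coquelicot.
Require Import Defs.
Open Scope R_scope.

Definition D v x t := v * sinh (v*t) / cosh (v*t) - x * sinh t.
Definition D2 v x t := v^2 / (cosh (v*t))^2 - x * cosh t.

Lemma cosh_pos u : 0 < cosh u.
Proof. unfold cosh. pose proof (exp_pos u); pose proof (exp_pos (-u)). lra. Qed.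

Lemma g_der v x t : is_derive (gvx v x) t (D v x t).
Proof.
  unfold gvx, D. pose proof (cosh_pos (v*t)). unfold cosh, sinh in *.
  auto_derive. lra. field. lra.
Qed.

Lemma D_der v x t : is_derive (D v x) t (D2 v x t).
Proof.
  unfold D2, D. pose proof (cosh_pos (v*t)). unfold cosh, sinh in *.
  auto_derive. lra. rewrite !exp_Ropp in *. pose proof (exp_pos (v*t)).
  set (a := exp (v*t)) in *. field. pose proof (exp_pos t). split; [lra|split; nra].
Qed.

Lemma D2_cont v x : continuity (D2 v x).
Proof.
  intro t. apply continuity_pt_filterlim. apply (ex_derive_continuous (D2 v x) t).
  unfold D2. pose proof (cosh_pos (v*t)). unfold cosh in *. auto_derive. nra.
Qed.

Lemma deriv_cont f df : (forall t, is_derive f t (df t)) -> continuity f.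
Proof. intros H t. apply continuity_pt_filterlim. apply (ex_derive_continuous f t). eexists; apply H. Qed.

Lemma strict_incr f df s t : (forall u, is_derive f u (df u)) -> s < t ->
  (forall c, s < c < t -> 0 < df c) -> f s < f t.
Proof.
  intros Hd Hst Hp. destruct (MVT_cor2 f df s t Hst) as [c [Hc1 Hc2]].
  intros c _; apply is_derive_Reals, Hd.
  specialize (Hp c Hc2). nra.
Qed.

Lemma strict_decr f df s t : (forall u, is_derive f u (df u)) -> s < t ->
  (forall c, s < c < t -> df c < 0) -> f t < f s.
Proof.
  intros Hd Hst Hp. destruct (MVT_cor2 f df s t Hst) as [c [Hc1 Hc2]].
  intros c _; apply is_derive_Reals, Hd.
  specialize (Hp c Hc2). nra.
Qed.

Lemma cosh_ge1 u : 1 <= cosh u.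
Proof.
  unfold cosh. rewrite exp_Ropp. pose proof (exp_pos u). set (a := exp u) in *.
  assert (a + /a - 2 = (a-1)^2 * /a) by (field; lra). assert (0 < /a) by (apply Rinv_0_lt_compat; lra).
  assert (0 <= (a-1)^2 * /a) by (apply Rmult_le_pos; [apply pow2_ge_0| lra]). lra.
Qed.

Lemma cosh_gt1 u : u <> 0 -> 1 < cosh u.
Proof.
  intro Hu. unfold cosh. rewrite exp_Ropp. pose proof (exp_pos u).
  assert (exp u <> 1). { intro E. apply Hu. apply exp_inv. rewrite E, exp_0. reflexivity. }
  set (a := exp u) in *.
  assert (a + /a - 2 = (a-1)^2 * /a) by (field; lra). assert (0 < /a) by (apply Rinv_0_lt_compat; lra).
  assert (0 < (a - 1)^2). { assert (a - 1 <> 0) by lra. nra. }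
  nra.
Qed.

Lemma cosh_mono a b : 0 <= a < b -> cosh a < cosh b.
Proof.
  intros H. unfold cosh. rewrite !exp_Ropp.
  pose proof (exp_ineq1_le a). pose proof (exp_increasing a b (proj2 H)).
  set (y := exp a) in *. set (z := exp b) in *.
  assert (y * /y = 1) by (field; lra). assert (z * /z = 1) by (field; lra).
  assert (0 < /y) by (apply Rinv_0_lt_compat; lra).
  assert (0 < /z) by (apply Rinv_0_lt_compat; lra).
  assert (/y - /z = (z - y) * (/y * /z)) by (field; lra).
  assert (/y * /z < 1). { assert (1 < y * z) by nra.
    assert ((/y * /z) * (y * z) = 1) by (field; lra). nra. }
  nra.
Qed.

Lemma cosh_even u : cosh (- u) = cosh u.
Proof. unfold cosh. rewrite Ropp_involutive. lra. Qed.

Lemma cosh_abs u : cosh (Rabs u) = cosh u.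
Proof. unfold Rabs. destruct (Rcase_abs u). apply cosh_even. reflexivity. Qed.

Lemma cosh_vt_mono v a b : 0 <= a <= b -> cosh (v*a) <= cosh (v*b).
Proof.
  intros H. rewrite <- (cosh_abs (v*a)), <- (cosh_abs (v*b)), !Rabs_mult.
  rewrite (Rabs_right a), (Rabs_right b) by lra.
  pose proof (Rabs_pos v).
  destruct (Req_dec (Rabs v * a) (Rabs v * b)) as [E|E]. rewrite E; lra.
  left. apply cosh_mono. split. nra. nra.
Qed.

Lemma D2_decr v x (hx : 0 < x) a b : 0 <= a < b -> D2 v x b < D2 v x a.
Proof.
  intros H. unfold D2.
  pose proof (cosh_vt_mono v a b (conj (proj1 H) (Rlt_le _ _ (proj2 H)))).
  pose proof (cosh_mono a b H). pose proof (cosh_pos (v*a)).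
  assert (v^2 / cosh (v*b) ^2 <= v^2 / cosh (v*a) ^2).
  { unfold Rdiv. apply Rmult_le_compat_l. nra. apply Rinv_le_contravar. nra.
    apply pow_incr. lra. }
  nra.
Qed.

Lemma D_0 v x : D v x 0 = 0.
Proof. unfold D, sinh. rewrite Rmult_0_r, Ropp_0, Rminus_diag. unfold Rdiv. ring. Qed.

Lemma D2_0 v x : D2 v x 0 = v^2 - x.
Proof. unfold D2. rewrite Rmult_0_r, cosh_0. field. Qed.

Lemma sinh_cosh u : - cosh u < sinh u < cosh u.
Proof. unfold sinh, cosh. pose proof (exp_pos u); pose proof (exp_pos (-u)). lra. Qed.

Lemma D_bound v x t : D v x t <= Rabs v - x * sinh t.
Proof.
  unfold D. pose proof (sinh_cosh (v*t)). pose proof (cosh_pos (v*t)).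
  assert (v * sinh (v*t) / cosh (v*t) <= Rabs v).
  { apply Rle_div_l. lra. unfold Rabs. destruct (Rcase_abs v); nra. }
  lra.
Qed.

Lemma sinh_lb t : 0 <= t -> t / 2 <= sinh t.
Proof.
  intros H. unfold sinh. pose proof (exp_ineq1_le t). rewrite exp_Ropp.
  pose proof (exp_pos t).
  assert (/ exp t <= 1). { rewrite <- Rinv_1. apply Rinv_le_contravar; lra. }
  lra.
Qed.

Lemma cosh_lb t : 0 <= t -> t^2 / 8 <= cosh t.
Proof.
  intros H. unfold cosh. pose proof (exp_pos (-t)).
  replace t with (t/2 + t/2) at 2 by field. rewrite exp_plus.
  pose proof (exp_ineq1_le (t/2)). nra.
Qed.

Lemma lncosh_ub v t : 0 <= t -> ln (cosh (v*t)) <= Rabs v * t.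
Proof.
  intros H. rewrite <- (cosh_abs (v*t)), Rabs_mult, (Rabs_right t) by lra.
  set (u := Rabs v * t). assert (0 <= u) by (unfold u; pose proof (Rabs_pos v); nra).
  rewrite <- (ln_exp u) at 2. apply ln_le. apply cosh_pos.
  unfold cosh. rewrite exp_Ropp. pose proof (exp_ineq1_le u). pose proof (exp_pos u).
  assert (/ exp u <= 1). { rewrite <- Rinv_1. apply Rinv_le_contravar; lra. }
  lra.
Qed.

Lemma g_ub v x t : 0 <= t -> gvx v x t <= Rabs v * t - x * (t^2/8) \/ x <= 0.
Proof.
  intros H. destruct (Rle_or_lt x 0). right; auto. left. unfold gvx.
  pose proof (lncosh_ub v t H). pose proof (cosh_lb t H). nra.
Qed.

Lemma g_small v x (hx : 0 < x) T C : exists t, T <= t /\ gvx v x t < C.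
Proof.
  set (K := Rabs v + Rabs C + 1).
  assert (0 < K) by (unfold K; pose proof (Rabs_pos v); pose proof (Rabs_pos C); lra).
  set (t := Rabs T + 8 * K / x + 1).
  assert (8 * K / x > 0) by (apply Rdiv_lt_0_compat; lra).
  assert (T <= t) by (unfold t; pose proof (Rle_abs T); lra).
  assert (1 <= t) by (unfold t; pose proof (Rabs_pos T); lra).
  assert (x * t >= 8 * K).
  { assert (x * (8*K/x) = 8*K) by (field; lra). unfold t. pose proof (Rabs_pos T). nra. }
  exists t. split. auto.
  destruct (g_ub v x t ltac:(lra)) as [G|G]; [|lra].
  assert (x * t^2 >= 8 * K * t) by nra.
  assert ((Rabs C + 1) * t >= Rabs C + 1) by (pose proof (Rabs_pos C); nra).
  pose proof (Rle_abs (-C)). rewrite Rabs_Ropp in *.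
  unfold K in *. nra.
Qed.

Lemma case1 v x (hx : 0 < x) : v^2 <= x ->
  forall s t, 0 <= s < t -> gvx v x t < gvx v x s.
Proof.
  intros Hv.
  assert (HD : forall c, 0 < c -> D v x c < 0).
  { intros c Hc. rewrite <- (D_0 v x). apply (strict_decr _ (D2 v x)); auto.
    apply D_der. intros u Hu. pose proof (D2_decr v x hx 0 u ltac:(lra)).
    rewrite D2_0 in H. lra. }
  intros s t Hst. apply (strict_decr _ (D v x)). apply g_der. lra.
  intros c Hc. apply HD. lra.
Qed.

Lemma ivt f a b y : continuity f -> a <= b ->
  Rmin (f a) (f b) <= y <= Rmax (f a) (f b) -> exists c, a <= c <= b /\ f c = y.
Proof.
  intros Hc Hab Hy. destruct (IVT_gen f a b y Hc Hy) as [c [Hc1 Hc2]].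
  exists c. split; auto. unfold Rmin, Rmax in Hc1. destruct (Rle_dec a b); lra.
Qed.

Lemma case2 v x (hx : 0 < x) : x < v^2 ->
  exists tp, 0 < tp /\ D v x tp = 0 /\
       (forall t, 0 < t -> D v x t = 0 -> t = tp) /\
       (forall t, 0 < t -> t < tp -> 0 < D v x t) /\
       (forall t, tp < t -> D v x t < 0).
Proof.
  intros Hv.
  set (T := 2 * v^2 / x + 1).
  assert (HT : 0 < T) by (unfold T; assert (0 <= 2 * v^2 / x) by (apply Rmult_le_pos; [nra| left; apply Rinv_0_lt_compat; lra]); lra).
  assert (D2 v x T < 0).
  { unfold D2. pose proof (cosh_ge1 (v*T)).
    assert (v^2 / cosh (v*T)^2 <= v^2).
    { assert (1 <= cosh (v*T)^2) by nra. pose proof (pow2_ge_0 v).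
      apply Rle_div_l. nra. nra. }
    assert (cosh T >= (1 + T) / 2).
    { unfold cosh. pose proof (exp_ineq1_le T). pose proof (exp_pos (-T)). lra. }
    assert (x * ((1+T)/2) > v^2).
    { assert (x * (2 * v^2 / x) = 2 * v^2) by (field; lra). unfold T. nra. }
    nra. }
  destruct (ivt (D2 v x) 0 T 0 (D2_cont v x) ltac:(lra)) as [s0 [Hs0 Es0]].
  { rewrite D2_0. unfold Rmin, Rmax. destruct (Rle_dec _ _); lra. }
  assert (Hs0p : 0 < s0). { destruct (Req_dec s0 0) as [E|E]. rewrite E, D2_0 in Es0. lra. lra. }
  assert (HD2p : forall c, 0 <= c < s0 -> 0 < D2 v x c).
  { intros c Hc. rewrite <- Es0. apply D2_decr; auto; lra. }
  assert (HD2n : forall c, s0 < c -> D2 v x c < 0).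
  { intros c Hc. rewrite <- Es0. apply D2_decr; auto; lra. }
  assert (Hinc : forall a b, 0 <= a < b -> b <= s0 -> D v x a < D v x b).
  { intros a b Hab Hb. apply (strict_incr _ (D2 v x)); try apply D_der. lra.
    intros c Hc. apply HD2p. lra. }
  assert (Hdec : forall a b, s0 <= a < b -> D v x b < D v x a).
  { intros a b Hab. apply (strict_decr _ (D2 v x)); try apply D_der. lra.
    intros c Hc. apply HD2n. lra. }
  assert (HDs0 : 0 < D v x s0). { rewrite <- (D_0 v x). apply Hinc; lra. }
  set (T2 := s0 + 2 * Rabs v / x + 1).
  assert (0 <= 2 * Rabs v / x) by (apply Rmult_le_pos; [pose proof (Rabs_pos v); lra| left; apply Rinv_0_lt_compat; lra]).
  assert (D v x T2 < 0).
  { pose proof (D_bound v x T2). pose proof (sinh_lb T2 ltac:(unfold T2; lra)).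
    assert (x * (2 * Rabs v / x) = 2 * Rabs v) by (field; lra).
    assert (x * (T2/2) > Rabs v) by (unfold T2; nra). nra. }
  destruct (ivt (D v x) s0 T2 0 (deriv_cont _ _ (D_der v x)) ltac:(unfold T2; lra)) as [tp [Htp Etp]].
  { unfold Rmin, Rmax. destruct (Rle_dec _ _); lra. }
  assert (Htps : s0 < tp). { destruct (Req_dec tp s0) as [E|E]. rewrite E in Etp; lra. lra. }
  exists tp. split. lra. split. auto. split; [|split].
  - intros t Ht Et. destruct (Rle_or_lt t s0).
    + assert (D v x 0 < D v x t) by (destruct (Req_dec t s0) as [E|E]; [subst t; rewrite D_0; lra| apply Hinc; lra]).
      rewrite D_0 in H3. lra.
    + destruct (Rtotal_order t tp) as [h|[h|h]]; auto.
      * pose proof (Hdec t tp ltac:(lra)). lra.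
      * pose proof (Hdec tp t ltac:(lra)). lra.
  - intros t Ht Htl. destruct (Rle_or_lt t s0).
    + destruct (Req_dec t s0) as [E|E]. subst t; lra.
      pose proof (Hinc 0 t ltac:(lra) ltac:(lra)). rewrite D_0 in H3. lra.
    + pose proof (Hdec t tp ltac:(lra)). lra.
  - intros t Ht. pose proof (Hdec tp t ltac:(lra)). lra.
Qed.

Lemma unimodal (g : R -> R) (T : R) :
  continuity g -> 0 <= T ->
  (forall s t, 0 <= s < t -> t <= T -> g s < g t) ->
  (forall s t, T <= s < t -> g t < g s) ->
  (forall C, exists t, T <= t /\ g t < C) ->
  (forall t, 0 <= t -> g t <= g T) /\
  (forall tp, 0 <= tp -> (forall t, 0 <= t -> g t <= g tp) -> tp = T) /\
  (forall C, C < g T -> exists t0 t1, 0 <= t0 <= T /\ T <= t1 /\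
      forall t, (0 <= t /\ C <= g t) <-> t0 <= t <= t1).
Proof.
  intros Hc HT Hi Hd Hs.
  assert (Hmax : forall t, 0 <= t -> g t <= g T).
  { intros t Ht. destruct (Rtotal_order t T) as [h|[h|h]].
    - left. apply Hi; lra.
    - subst; lra.
    - left. apply Hd; lra. }
  split; [auto|split].
  - intros tp Htp Hm. destruct (Rtotal_order tp T) as [h|[h|h]]; auto.
    + pose proof (Hi tp T ltac:(lra) ltac:(lra)). pose proof (Hm T HT). lra.
    + pose proof (Hd T tp ltac:(lra)). pose proof (Hm T HT). lra.
  - intros C HC.
    destruct (Hs C) as [tb [Htb Gtb]].
    destruct (ivt g T tb C Hc Htb) as [t1 [Ht1 Et1]].
    { unfold Rmin, Rmax. destruct (Rle_dec _ _); lra. }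
    assert (H1 : forall t, T <= t -> (C <= g t <-> t <= t1)).
    { intros t Ht. split.
      - intros Hg. destruct (Rle_or_lt t t1); auto.
        pose proof (Hd t1 t ltac:(lra)). lra.
      - intros Hl. destruct (Req_dec t t1). subst; lra.
        pose proof (Hd t t1 ltac:(lra)). lra. }
    assert (H0 : exists t0, 0 <= t0 <= T /\ forall t, 0 <= t <= T -> (C <= g t <-> t0 <= t)).
    { destruct (Rle_or_lt C (g 0)).
      - exists 0. split. lra. intros t Ht. split. lra. intros _.
        destruct (Req_dec t 0). subst; lra.
        pose proof (Hi 0 t ltac:(lra) ltac:(lra)). lra.
      - destruct (ivt g 0 T C Hc HT) as [t0 [Ht0 Et0]].
        { unfold Rmin, Rmax. destruct (Rle_dec _ _); lra. }
        exists t0. split. auto. intros t Ht. split.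
        + intros Hg. destruct (Rle_or_lt t0 t); auto.
          pose proof (Hi t t0 ltac:(lra) ltac:(lra)). lra.
        + intros Hl. destruct (Req_dec t t0). subst; lra.
          pose proof (Hi t0 t ltac:(lra) ltac:(lra)). lra. }
    destruct H0 as [t0 [Ht0 H0]].
    exists t0, t1. split. auto. split. lra.
    intros t. split.
    + intros [Ht Hg]. destruct (Rle_or_lt t T).
      * apply H0 in Hg; lra.
      * apply H1 in Hg; lra.
    + intros Ht. destruct (Rle_or_lt t T).
      * split. lra. apply H0; lra.
      * split. lra. apply H1; lra.
Qed.

Lemma f_eq v x t : fvx v x t = exp (gvx v x t).
Proof. unfold fvx, gvx. unfold Rminus. rewrite exp_plus, exp_ln by apply cosh_pos.
  rewrite Ropp_mult_distr_l. reflexivity. Qed.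

Lemma exp_le_iff a b : exp a <= exp b <-> a <= b.
Proof.
  split; intro H.
  - destruct (Rle_or_lt a b); auto. pose proof (exp_increasing b a H0). lra.
  - destruct (Req_dec a b). subst; lra. left; apply exp_increasing; lra.
Qed.

Theorem mainTheorem1 (v x : R) (hx : 0 < x) :
  (* (i) *)
  (v ^ 2 <= x ->
     (forall s t, 0 <= s -> s <= t -> gvx v x t <= gvx v x s) /\
     (forall t, 0 <= t -> gvx v x t <= gvx v x 0)) /\
  (* (ii) *)
  (x < v ^ 2 ->
     exists tp, 0 < tp /\ Derive (gvx v x) tp = 0 /\
       (forall t, 0 < t -> Derive (gvx v x) t = 0 -> t = tp) /\
       (forall t, 0 < t -> t < tp -> 0 < Derive (gvx v x) t) /\
       (forall t, tp < t -> Derive (gvx v x) t < 0)) /\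
  (* moreover: a maximizer exists, and every superlevel set is an interval *)
  (exists tp, 0 <= tp /\ forall t, 0 <= t -> fvx v x t <= fvx v x tp) /\
  (forall tp, 0 <= tp -> (forall t, 0 <= t -> fvx v x t <= fvx v x tp) ->
     forall eps, 0 < eps < 1 ->
       exists t0 t1, 0 <= t0 <= tp /\ tp <= t1 /\
         forall t, (0 <= t /\ eps * fvx v x tp <= fvx v x t) <-> t0 <= t <= t1).
Proof.
  assert (HDer : forall t, Derive (gvx v x) t = D v x t).
  { intro t. apply is_derive_unique, g_der. }
  split.
  { intros Hv. pose proof (case1 v x hx Hv) as H. split.
    - intros s t Hs Hst. destruct (Req_dec s t). subst; lra. left; apply H; lra.
    - intros t Ht. destruct (Req_dec t 0). subst; lra. left; apply H; lra. }
  split.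
  { intros Hv. destruct (case2 v x hx Hv) as [tp [H1 [H2 [H3 [H4 H5]]]]].
    exists tp. rewrite !HDer. split; auto. split; auto. split; [|split].
    - intros t Ht. rewrite HDer. apply H3; auto.
    - intros t Ht Ht'. rewrite HDer. apply H4; auto.
    - intros t Ht. rewrite HDer. apply H5; auto. }
  assert (HU : exists T, 0 <= T /\ (forall s t, 0 <= s < t -> t <= T -> gvx v x s < gvx v x t)
     /\ (forall s t, T <= s < t -> gvx v x t < gvx v x s)).
  { destruct (Rle_or_lt (v^2) x) as [Hv|Hv].
    - exists 0. split. lra. split. intros; lra. intros s t Hst. apply (case1 v x hx Hv). lra.
    - destruct (case2 v x hx Hv) as [tp [H1 [H2 [H3 [H4 H5]]]]].
      exists tp. split. lra. split.
      + intros s t Hst Ht. apply (strict_incr _ (D v x)). apply g_der. lra.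
        intros c Hc. apply H4; lra.
      + intros s t Hst. apply (strict_decr _ (D v x)). apply g_der. lra.
        intros c Hc. apply H5; lra. }
  destruct HU as [T [HT [Hi Hd]]].
  destruct (unimodal (gvx v x) T (deriv_cont _ _ (g_der v x)) HT Hi Hd (g_small v x hx T))
    as [Hmax [Huniq Hlev]].
  split.
  { exists T. split. auto. intros t Ht. rewrite !f_eq. apply exp_le_iff. auto. }
  intros tp Htp Hm eps Heps.
  assert (tp = T).
  { apply Huniq; auto. intros t Ht. apply exp_le_iff. rewrite <- !f_eq. auto. }
  subst tp.
  assert (Hl : ln eps < 0). { rewrite <- ln_1. apply ln_increasing; lra. }
  destruct (Hlev (ln eps + gvx v x T) ltac:(lra)) as [t0 [t1 [H0 [H1 H2]]]].
  exists t0, t1. split. auto. split. auto. intros t.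
  assert (E : eps * fvx v x T = exp (ln eps + gvx v x T)).
  { rewrite exp_plus, exp_ln by lra. rewrite f_eq. reflexivity. }
  rewrite E, f_eq, exp_le_iff. apply H2.
Qed.
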